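(* Let $n\ge1$, $\omega\in(0,1)$, and let $B_1,\dots,B_n$ be independent real-valued service times with finite means $\mu_i$ and variances, satisfying $B_1\le_{\mathrm{dil}}\cdots\le_{\mathrm{dil}}B_n$. Then there is a sequence $\tau\in\mathsf S_n$ minimizing $C(\tau,\boldsymbol\mu,\omega)$ over $\mathsf S_n$ that satisfies $\tau(n)=n$.
   Context: Appointment model: a sequence is a permutation $\tau\in\mathsf S_n$, $\tau(i)$ the patient in slot $i$; a schedule is $\boldsymbol x=(x_1,\dots,x_n)$, $x_j$ the interarrival time between patient $j$ and the next patient; the mean-based schedule is $\boldsymbol\mu=(\mu_1,\dots,\mu_n)$. Waiting and idle times: $W_1=I_1=0$, $W_{i+1}=(W_i+B_{\tau(i)}-x_{\tau(i)})^+$, $I_{i+1}=(W_i+B_{\tau(i)}-x_{\tau(i)})^-$, $a^+=\max\{0,a\}$, $a^-=\max\{0,-a\}$. Cost $C(\tau,\boldsymbol x,\omega)=\omega\sum_{i=1}^n\mathbb EI_i+(1-\omega)\sum_{i=1}^n\mathbb EW_i$. $X\le_{\mathrm{cx}}Y$ means $\mathbb E\phi(X)\le\mathbb E\phi(Y)$ for all convex $\phi$ for which the expectations exist; $X\le_{\mathrm{dil}}Y$ means $X-\mathbb EX\le_{\mathrm{cx}}Y-\mathbb EY$. *)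

(* Defs.v *)
From HB Require Import structures.
From mathcomp Require Import all_boot all_order all_algebra.
From mathcomp Require Import all_classical all_reals all_analysis.
From mathcomp Require Import fingroup perm.
Set Implicit Arguments. Unset Strict Implicit. Unset Printing Implicit Defensive.
Import Order.TTheory GRing.Theory Num.Theory.
Local Open Scope classical_set_scope.
Local Open Scope ring_scope.

Definition convex_fun (R : realType) (phi : R -> R) : Prop :=
  forall (x y t : R), 0 <= t -> t <= 1 ->
    phi (t * x + (1 - t) * y) <= t * phi x + (1 - t) * phi y.

Definition independent_rvs (d : measure_display) (T : measurableType d)
  (R : realType) (P : probability T R) (k : nat) (X : 'I_k -> {RV P >-> R}) : Prop :=
  forall A : 'I_k -> set R, (forall j, measurable (A j)) ->
    P (\bigcap_j (X j @^-1` A j)) = (\prod_(j < k) P (X j @^-1` A j))%E.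

Definition finite_mean_var (d : measure_display) (T : measurableType d)
  (R : realType) (P : probability T R) (X : {RV P >-> R}) : Prop :=
  P.-integrable setT (EFin \o X) /\
  P.-integrable setT (EFin \o (fun t => X t ^+ 2)).

(** Real-valued mean (meaningful when the mean is finite). *)
Definition mean (d : measure_display) (T : measurableType d)
  (R : realType) (P : probability T R) (X : T -> R) : R :=
  fine (\int[P]_t (X t)%:E)%E.

(** Convex order:  X <=cx Y  iff  E phi(X) <= E phi(Y) for all convex phi
    for which the expectations exist (read: are finite). *)
Definition le_cx (d : measure_display) (T : measurableType d)
  (R : realType) (P : probability T R) (X Y : T -> R) : Prop :=
  forall phi : R -> R, convex_fun phi ->
    P.-integrable setT (EFin \o (phi \o X)) ->
    P.-integrable setT (EFin \o (phi \o Y)) ->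
    (\int[P]_t (phi (X t))%:E <= \int[P]_t (phi (Y t))%:E)%E.

Definition le_dil (d : measure_display) (T : measurableType d)
  (R : realType) (P : probability T R) (X Y : T -> R) : Prop :=
  le_cx P (fun t => X t - mean P X) (fun t => Y t - mean P Y).

(** Waiting / idle times in slots 0..k (slot i here = slot i+1 of the paper),
    for sequence tau (tau i = patient in slot i), schedule x (x j = interarrival
    time after patient j), service times B. *)
Fixpoint waiting (R : realType) (T : Type) (k : nat) (tau : {perm 'I_k.+1})
  (x : 'I_k.+1 -> R) (B : 'I_k.+1 -> T -> R) (i : nat) (t : T) : R :=
  match i with
  | 0%N => 0
  | i'.+1 => Num.max 0 (waiting tau x B i' t + B (tau (inord i')) t - x (tau (inord i')))
  end.

Definition idle (R : realType) (T : Type) (k : nat) (tau : {perm 'I_k.+1})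
  (x : 'I_k.+1 -> R) (B : 'I_k.+1 -> T -> R) (i : nat) (t : T) : R :=
  match i with
  | 0%N => 0
  | i'.+1 => Num.max 0 (- (waiting tau x B i' t + B (tau (inord i')) t - x (tau (inord i'))))
  end.

Definition cost (d : measure_display) (T : measurableType d)
  (R : realType) (P : probability T R) (k : nat) (B : 'I_k.+1 -> T -> R)
  (tau : {perm 'I_k.+1}) (x : 'I_k.+1 -> R) (w : R) : \bar R :=
  (w%:E * (\sum_(i < k.+1) \int[P]_t (idle tau x B i t)%:E)
   + (1 - w)%:E * (\sum_(i < k.+1) \int[P]_t (waiting tau x B i t)%:E))%E.

(* Main.v *)
Require Import Defs.
From HB Require Import structures.
From mathcomp Require Import all_boot all_order all_algebra.
From mathcomp Require Import all_classical all_reals all_analysis.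
From mathcomp Require Import measurable_realfun.
From mathcomp Require Import fingroup perm.
From mathcomp Require Import ring lra.
Import Order.TTheory GRing.Theory Num.Theory.
Import numFieldNormedType.Exports.
Local Open Scope classical_set_scope.
Local Open Scope ring_scope.

Section PartA.
Variable R : realType.

Fixpoint wv (v : nat -> R) (i : nat) : R :=
  match i with 0%N => 0 | i'.+1 => Num.max 0 (wv v i' + v i') end.
Definition iv (v : nat -> R) (i : nat) : R :=
  match i with 0%N => 0 | i'.+1 => Num.max 0 (- (wv v i' + v i')) end.
Definition Phi (w : R) (n : nat) (v : nat -> R) : R :=
  w * \sum_(i < n.+1) iv v i + (1 - w) * \sum_(i < n.+1) wv v i.

Lemma wv_ge0 v i : 0 <= wv v i.
Proof. by case: i => [|i] //=; rewrite le_max lexx. Qed.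

Lemma iv_ge0 v i : 0 <= iv v i.
Proof. by case: i => [|i] //=; rewrite le_max lexx. Qed.

Lemma Phi_ge0 w n v : 0 <= w -> w <= 1 -> 0 <= Phi w n v.
Proof.
move=> w0 w1; rewrite /Phi addr_ge0 // mulr_ge0 ?subr_ge0 //;
  by apply: sumr_ge0 => i _; rewrite ?wv_ge0 ?iv_ge0.
Qed.

Lemma sum_iv v k : \sum_(i < k.+1) iv v i = wv v k - \sum_(i < k) v i.
Proof.
elim: k => [|k IH]; first by rewrite big_ord1 big_ord0 /= subr0.
rewrite big_ord_recr /= IH big_ord_recr /=.
have -> : Num.max 0 (- (wv v k + v k)) = Num.max 0 (wv v k + v k) - (wv v k + v k).
  move: (wv v k + v k) => a.
  have [h|h] := boolP (0 <= a).
    by rewrite (max_idPr h) subrr; apply/max_idPl; rewrite oppr_le0.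
  have h' : a <= 0 by rewrite leNgt -real_leNgt ?num_real // in h; rewrite le_eqVlt ltNge h orbT.
  by rewrite (max_idPl h') sub0r; apply/max_idPr; rewrite oppr_ge0.
lra.
Qed.

Lemma wv_ext v v' k : (forall i, (i < k)%N -> v i = v' i) -> wv v k = wv v' k.
Proof.
elim: k => [|k IH] H //=; rewrite IH ?H // => i hi; apply: H; exact: ltnW.
Qed.

Lemma iv_ext v v' k : (forall i, (i < k)%N -> v i = v' i) -> iv v k = iv v' k.
Proof.
case: k => [|k] H //=; rewrite (@wv_ext v v' k) ?H // => i hi; apply: H; exact: ltnW.
Qed.

Lemma Phi_ext w n v v' : (forall i, (i < n)%N -> v i = v' i) -> Phi w n v = Phi w n v'.
Proof.
move=> H; rewrite /Phi; congr (_ * _ + _ * _); apply: eq_bigr => i _.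
  by apply: iv_ext => k hk; apply: H; apply: leq_trans hk _; rewrite -ltnS.
by apply: wv_ext => k hk; apply: H; apply: leq_trans hk _; rewrite -ltnS.
Qed.

Definition Sabs (v : nat -> R) k := \sum_(i < k) `|v i|.

Lemma Sabs_ge0 v k : 0 <= Sabs v k.
Proof. by apply: sumr_ge0. Qed.

Lemma Sabs_mono v k l : (k <= l)%N -> Sabs v k <= Sabs v l.
Proof.
move=> kl; rewrite /Sabs -(subnKC kl) big_split_ord /= lerDl.
by apply: sumr_ge0.
Qed.

Lemma wv_le v k : wv v k <= Sabs v k.
Proof.
elim: k => [|k IH] /=; first by rewrite /Sabs big_ord0.
rewrite /Sabs big_ord_recr /= -/(Sabs v k) ge_max addr_ge0 ?Sabs_ge0 //=.
by rewrite lerD // ler_norm.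
Qed.

Lemma iv_le v k : iv v k <= Sabs v k.
Proof.
case: k => [|k] /=; first by rewrite /Sabs big_ord0.
rewrite /Sabs big_ord_recr /= -/(Sabs v k) ge_max addr_ge0 ?Sabs_ge0 //=.
have := wv_ge0 v k; have := Sabs_ge0 v k; have := ler_norm (- v k).
rewrite normrN; lra.
Qed.

Lemma Phi_le w n v : 0 <= w -> w <= 1 -> Phi w n v <= n.+1%:R * Sabs v n.
Proof.
move=> w0 w1; rewrite /Phi.
have H1 : \sum_(i < n.+1) iv v i <= n.+1%:R * Sabs v n.
  have -> : n.+1%:R * Sabs v n = \sum_(i < n.+1) Sabs v n by rewrite sumr_const card_ord mulr_natl.
  apply: ler_sum => i _.
  by apply: (le_trans (iv_le v i)); apply: Sabs_mono; rewrite -ltnS.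
have H2 : \sum_(i < n.+1) wv v i <= n.+1%:R * Sabs v n.
  have -> : n.+1%:R * Sabs v n = \sum_(i < n.+1) Sabs v n by rewrite sumr_const card_ord mulr_natl.
  apply: ler_sum => i _.
  by apply: (le_trans (wv_le v i)); apply: Sabs_mono; rewrite -ltnS.
have w1' : 0 <= 1 - w by lra.
have := ler_wpM2l w0 H1; have := ler_wpM2l w1' H2; lra.
Qed.

Lemma cvx_add (f g : R -> R) : convex_fun f -> convex_fun g -> convex_fun (fun z => f z + g z).
Proof. by move=> hf hg x y t t0 t1; have := hf x y t t0 t1; have := hg x y t t0 t1; lra. Qed.

Lemma cvx_scale (c : R) (f : R -> R) : 0 <= c -> convex_fun f -> convex_fun (fun z => c * f z).
Proof.
move=> c0 hf x y t t0 t1; have := ler_wpM2l c0 (hf x y t t0 t1).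
by rewrite mulrDr !mulrA ![c * t]mulrC ![c * (1 - t)]mulrC -!mulrA.
Qed.

Lemma cvx_affine (a b : R) : convex_fun (fun z => a * z + b).
Proof. by move=> x y t _ _; rewrite le_eqVlt; apply/orP; left; apply/eqP; ring. Qed.

Lemma cvx_max (f g : R -> R) : convex_fun f -> convex_fun g -> convex_fun (fun z => Num.max (f z) (g z)).
Proof.
move=> hf hg x y t t0 t1; have t1' : 0 <= 1 - t by lra.
rewrite ge_max; apply/andP; split.
  apply: le_trans (hf x y t t0 t1) _; apply: lerD; apply: ler_wpM2l => //; by rewrite le_max lexx.
apply: le_trans (hg x y t t0 t1) _; apply: lerD; apply: ler_wpM2l => //; by rewrite le_max lexx orbT.
Qed.

Definition affine (f : R -> R) := exists a b : R, forall z, f z = a * z + b.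

Lemma cvx_of_affine f : affine f -> convex_fun f.
Proof. by move=> [a [b H]] x y t t0 t1; rewrite !H; apply: cvx_affine. Qed.

Definition upd (v : nat -> R) (j : nat) (z : R) : nat -> R :=
  fun i => if i == j then z else v i.

Lemma upd_affine v j i : affine (fun z => upd v j z i).
Proof.
rewrite /upd; case: (i == j); first by exists 1, 0 => z; ring.
by exists 0, (v i) => z; ring.
Qed.

Lemma sum_upd_affine v j k : affine (fun z => \sum_(i < k) upd v j z i).
Proof.
elim: k => [|k [a [b IH]]]; first by exists 0, 0 => z; rewrite big_ord0; ring.
have [a' [b' H]] := upd_affine v j k.
exists (a + a'), (b + b') => z; rewrite big_ord_recr /= IH H; ring.
Qed.

Lemma cvx_ext (f g : R -> R) : (forall z, f z = g z) -> convex_fun f -> convex_fun g.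
Proof. by move=> H hf x y t t0 t1; rewrite -!H; apply: hf. Qed.

Lemma wv_upd_cvx v j k : convex_fun (fun z => wv (upd v j z) k).
Proof.
elim: k => [|k IH] /=; first by apply: (cvx_ext (fun z : R => 0 * z + 0)) => [z|]; [ring|apply: cvx_affine].
apply: cvx_max; first by apply: (cvx_ext (fun z : R => 0 * z + 0)) => [z|]; [ring|apply: cvx_affine].
apply: cvx_add => //; exact/cvx_of_affine/upd_affine.
Qed.

Lemma Phi_upd_cvx w n v j : 0 <= w -> w <= 1 -> convex_fun (fun z => Phi w n (upd v j z)).
Proof.
move=> w0 w1; have w1' : 0 <= 1 - w by lra.
have [a [b H]] := sum_upd_affine v j n.
apply: (cvx_ext (fun z : R => w * wv (upd v j z) n + ((- w * a) * z + (- w * b))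
   + (1 - w) * \sum_(i < n.+1) wv (upd v j z) i)).
  by move=> z; rewrite /Phi sum_iv H; ring.
apply: cvx_add; first apply: cvx_add.
- exact/cvx_scale/wv_upd_cvx.
- exact: cvx_affine.
apply: cvx_scale => //.
elim: n.+1 => [|k IH].
  by apply: (cvx_ext (fun z : R => 0 * z + 0)) => [z|]; [rewrite big_ord0; ring|apply: cvx_affine].
by apply: (cvx_ext (fun z : R => \sum_(i < k) wv (upd v j z) i + wv (upd v j z) k)) => [z|];
  [rewrite big_ord_recr|apply: cvx_add => //; apply: wv_upd_cvx].
Qed.

End PartA.
Arguments wv {R}. Arguments iv {R}. Arguments Phi {R}. Arguments upd {R}. Arguments Sabs {R}.

Ltac side := solve [ done | exact/measurable_EFinP | exact/measurable_EFinP/measurable_funM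
  | by move=> ? _; rewrite lee_fin ?mulr_ge0 | by rewrite lee_fin | by move=> ?; rewrite lee_fin ?mulr_ge0 ].

Section Core.
Context d (T : measurableType d) (R : realType) (P : probability T R).
Context dS (S : measurableType dS).

Definition indep2 (X : T -> R) (Y : T -> S) :=
  forall A D, measurable A -> measurable D ->
    P (X @^-1` A `&` Y @^-1` D) = (P (X @^-1` A) * P (Y @^-1` D))%E.

Lemma fubini_indep (X : {mfun T >-> R}) (Y : {mfun T >-> S}) :
  indep2 X Y ->
  forall G : R * S -> \bar R, measurable_fun setT G -> (forall z, (0 <= G z)%E) ->
  (\int[P]_t G (X t, Y t) = \int[P]_t fubini_F (distribution P Y) G (X t))%E.
Proof.
move=> hi G mG G0.
have mXY : measurable_fun setT (fun t => (X t, Y t)).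
  exact: measurable_fun_pair.
pose XY := HB.pack_for ({mfun T >-> (R * S)%type}) (fun t => (X t, Y t))
  (isMeasurableFun.Build _ _ _ _ (fun t => (X t, Y t)) mXY).
transitivity (\int[distribution P XY]_z G z)%E.
  by rewrite ge0_integral_distribution.
transitivity (\int[(distribution P X \x distribution P Y)%E]_z G z)%E.
  apply: eq_measure_integral => E mE _.
  symmetry; apply: product_measure_unique => // A D mA mD.
rewrite fubini_tonelli1 // ge0_integral_distribution //.
  exact: measurable_fun_fubini_tonelli_F.
by move=> x; apply: integral_ge0 => y _; apply: G0.
Qed.


Lemma key (X1 X2 : {mfun T >-> R}) (Y : {mfun T >-> S}) (c1 c2 : R)
  (F : R -> S -> R) (a : S -> R) (b : R) :
  indep2 X1 Y -> indep2 X2 Y ->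
  measurable_fun setT (fun zs : R * S => F zs.1 zs.2) ->
  (forall z s, 0 <= F z s) -> (forall s, convex_fun (fun z => F z s)) ->
  (forall z s, F z s <= a s + b * `|z|) -> measurable_fun setT a -> 0 <= b ->
  P.-integrable setT (EFin \o (a \o Y)) ->
  (forall phi : R -> R, convex_fun phi -> measurable_fun setT phi ->
     (forall z, 0 <= phi z) ->
     (exists al be : R, forall z, phi z <= al + be * `|z|) ->
     (\int[P]_t (phi (X1 t - c1))%:E <= \int[P]_t (phi (X2 t - c2))%:E)%E) ->
  (\int[P]_t (F (X1 t - c1) (Y t))%:E <= \int[P]_t (F (X2 t - c2) (Y t))%:E)%E.
Proof.
move=> i1 i2 mF F0 Fc Fb ma b0 ia cx.
set PY := distribution P Y.
pose H z := (\int[PY]_s (F z s)%:E)%E.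
have mFz z : measurable_fun setT (F z).
  have := measurableT_comp mF (measurable_fun_pair (measurable_cst z) (@measurable_id _ S setT)).
  by [].
have a0 s : 0 <= a s.
  by have := F0 0 s; have := Fb 0 s; rewrite normr0 mulr0 addr0 => h1 h2; exact: le_trans h2 h1.
have Ia : (\int[PY]_s (a s)%:E < +oo)%E.
  rewrite ge0_integral_distribution //.
  - by have := integrable_lty measurableT ia.
  all: try exact/measurable_EFinP.
  all: try by move=> y /=; rewrite lee_fin.
set al := fine (\int[PY]_s (a s)%:E).
have alE : (\int[PY]_s (a s)%:E)%E = al%:E.
  rewrite fineK // ge0_fin_numE //; apply: integral_ge0 => s _; rewrite lee_fin.
  exact: a0.
have H0 z : (0 <= H z)%E by apply: integral_ge0 => s _; rewrite lee_fin.
have Hle z : (H z <= (al + b * `|z|)%:E)%E.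
  apply: (@le_trans _ _ (\int[PY]_s ((a s)%:E + (b * `|z|)%:E))%E).
    apply: ge0_le_integral => //.
    - by move=> s _; rewrite lee_fin.
    - exact/measurable_EFinP.
    - apply/measurable_EFinP; apply: measurable_funD => //.
    - by move=> s _; rewrite lee_fin.
  rewrite ge0_integralD //.
  - rewrite alE integral_cst //; rewrite le_eqVlt; apply/orP; left; apply/eqP; rewrite EFinD; congr (_ + _).
    by rewrite -[RHS]mule1; congr (_ * _)%E; exact: probability_setT.
  - by move=> s _; rewrite lee_fin.
  - exact/measurable_EFinP.
  - by move=> s _; rewrite lee_fin mulr_ge0.
pose h z := fine (H z).
have HE z : H z = (h z)%:E.
  rewrite /h fineK // ge0_fin_numE //; apply: le_lt_trans (Hle z) _.
  exact: ltry.
have mH : measurable_fun setT H.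
  apply: (@measurable_fun_fubini_tonelli_F _ _ _ _ _ PY (fun zs : R * S => (F zs.1 zs.2)%:E)).
    exact/measurable_EFinP.
  by move=> zs; rewrite lee_fin.
have mh : measurable_fun setT h.
  exact: (measurableT_comp (fine_measurable measurableT) mH).
have hc : convex_fun h.
  move=> x y t t0 t1; have t1' : 0 <= 1 - t by lra.
  rewrite -lee_fin -HE EFinD !EFinM -!HE.
  apply: (@le_trans _ _ (\int[PY]_s ((t * F x s)%:E + ((1 - t) * F y s)%:E))%E).
    apply: ge0_le_integral => //.
    - by move=> s _; rewrite lee_fin.
    - exact/measurable_EFinP.
    - apply/measurable_EFinP; apply: measurable_funD => //; exact: measurable_funM.
    - by move=> s _; rewrite lee_fin; apply: Fc.
  rewrite ge0_integralD; try side.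
  rewrite (_ : (fun s => (t * F x s)%:E) = (fun s => t%:E * (F x s)%:E)%E); last first.
    by apply: funext => s; rewrite EFinM.
  rewrite (_ : (fun s => ((1 - t) * F y s)%:E) = (fun s => (1 - t)%:E * (F y s)%:E)%E); last first.
    by apply: funext => s; rewrite EFinM.
  by rewrite ge0_integralZl; try side; rewrite ge0_integralZl; try side.
have E1 (X : {mfun T >-> R}) c : indep2 X Y ->
    (\int[P]_t (F (X t - c) (Y t))%:E = \int[P]_t (h (X t - c))%:E)%E.
  move=> ik.
  have := @fubini_indep X Y ik (fun zs => (F (zs.1 - c) zs.2)%:E).
  rewrite /=; move=> ->.
  - by apply: eq_integral => t _; rewrite /fubini_F -HE.
  - apply/measurable_EFinP.
    have := measurableT_comp mF (measurable_fun_pair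
       (measurable_funB (@measurable_fst _ _ R S) (measurable_cst c)) (@measurable_snd _ _ R S)).
    by [].
  - by move=> zs; rewrite lee_fin.
rewrite !E1 //; apply: cx => //.
- by move=> z; rewrite /h fine_ge0.
- exists al, b => z; rewrite -lee_fin -HE; exact: Hle.
Qed.

End Core.
Arguments indep2 {d T R} P {dS S}.

Section Tup.
Context (R : realType) (N : nat).

Definition box (Ai : 'I_N -> set R) : set (N.-tuple R) :=
  \bigcap_(i in [set: 'I_N]) ((fun y => tnth y i) @^-1` Ai i).

Lemma box_measurable Ai : (forall i, measurable (Ai i)) -> measurable (box Ai).
Proof.
move=> mA; apply: fin_bigcap_measurable; first exact: finite_finset.
move=> i _; rewrite -[X in measurable X]setTI; exact: measurable_tnth.
Qed.

Definition boxes : set (set (N.-tuple R)) :=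
  [set box Ai | Ai in [set Ai : 'I_N -> set R | forall i, measurable (Ai i)]].

Lemma tuple_measurableE : (@measurable _ (N.-tuple R)) = <<s boxes >>.
Proof.
apply/seteqP; split.
- change (g_sigma_preimage (fun i (x : N.-tuple R) => tnth x i) `<=` <<s boxes >>).
  apply: smallest_sub; first exact: smallest_sigma_algebra.
  move=> B; rewrite -bigcup_seq => -[i _ [A mA <-]].
  apply: sub_sigma_algebra; exists (fun k => if k == i then A else setT).
    by move=> k /=; case: (k == i).
  apply/seteqP; split => y /=.
    by move=> H; split => //; have := H i Logic.I; rewrite eqxx.
  by move=> [_ Ay] k _; case: eqP => [->|].
- apply: smallest_sub; first exact: sigma_algebra_measurable.
  by move=> _ [Ai mAi <-]; exact: box_measurable.
Qed.

Lemma boxes_setI : setI_closed boxes.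
Proof.
move=> _ _ [Ai mA <-] [Bi mB <-]; exists (fun i => Ai i `&` Bi i).
  by move=> i; apply: measurableI.
apply/seteqP; split => y /=.
  by move=> H; split => i _; have [] := H i Logic.I.
by move=> [H1 H2] i _; split; [exact: H1|exact: H2].
Qed.

Lemma boxesT : boxes setT.
Proof.
exists (fun _ => setT) => //; apply/seteqP; split => y //.
Qed.

End Tup.
Arguments box {R N}.

Section Indep.
Context d (T : measurableType d) (R : realType) (P : probability T R) (N : nat).

Lemma indep_ext (X : {mfun T >-> R}) (Y : {mfun T >-> N.-tuple R}) :
  (forall A Ai, measurable A -> (forall i, measurable (Ai i)) ->
     P (X @^-1` A `&` Y @^-1` box Ai) = (P (X @^-1` A) * P (Y @^-1` box Ai))%E) ->
  indep2 P X Y.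
Proof.
move=> h A D mA mD.
have mXA : measurable (X @^-1` A).
  by rewrite -[X in measurable X]setTI; apply: measurable_funP.
unshelve epose (m1 := (pushforward (mrestr P mXA) Y : {measure set (N.-tuple R) -> \bar R})).
  exact: measurable_funP.
have PXA0 : 0 <= fine (P (X @^-1` A)) by apply: fine_ge0; exact: measure_ge0.
pose r : {nonneg R} := NngNum PXA0.
pose m2 : {measure set (N.-tuple R) -> \bar R} := mscale r (distribution P Y).
have PXAE : P (X @^-1` A) = (fine (P (X @^-1` A)))%:E.
  by rewrite fineK //; apply: fin_num_measure.
have fmul : forall (u v : \bar R), u \is a fin_num -> ((fine u)%:E * v = u * v)%E.
  by move=> u v hu; rewrite fineK.
have := @measure_unique _ R _ (boxes R N) (fun _ => setT) (tuple_measurableE R N)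
  (@boxes_setI R N) (fun _ => boxesT R N) _ m1 m2 _ _ D mD.
- rewrite /m1 /m2 /= /pushforward /mrestr /mscale /= => E.
  rewrite setIC E. have Q := (fmul (P (X @^-1` A)) (P (Y @^-1` D)) (fin_num_measure P _ mXA)). by rewrite -Q.

- by apply/seteqP; split => y // _; exists 0%N.
- move=> _ [Ai mAi <-]; rewrite /m1 /m2 /= /pushforward /mrestr /mscale /=.
  rewrite setIC h //. have Q := (fmul (P (X @^-1` A)) (P (Y @^-1` box Ai)) (fin_num_measure P _ mXA)). by rewrite -Q.
- move=> k; rewrite /m1 /= /pushforward /mrestr /=.
  apply: (le_lt_trans (probability_le1 _ _)); last exact: ltry.
  by apply: measurableI => //; rewrite -[X in measurable X]setTI; apply: measurable_funP.
Qed.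

End Indep.

Section BoxIndep.
Context d (T : measurableType d) (R : realType) (P : probability T R) (N : nat).

Definition Yfun (B : 'I_N -> {RV P >-> R}) (bad : pred 'I_N) (t : T) : N.-tuple R :=
  [tuple (if bad q then 0 else B q t) | q < N].

Lemma YfunE (B : 'I_N -> {RV P >-> R}) (bad : pred 'I_N) t q :
  tnth (Yfun B bad t) q = if bad q then 0 else B q t.
Proof. by rewrite /Yfun tnth_mktuple. Qed.

Lemma box_indep (B : 'I_N -> {RV P >-> R}) (bad : pred 'I_N) (p : 'I_N) :
  independent_rvs B -> bad p ->
  forall A Ai, measurable A -> (forall i, measurable (Ai i)) ->
   P (B p @^-1` A `&` Yfun B bad @^-1` box Ai) =
   (P (B p @^-1` A) * P (Yfun B bad @^-1` box Ai))%E.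
Proof.
move=> hind bp A Ai mA mAi.
have YE : Yfun B bad @^-1` box Ai = [set t | forall q, Ai q (if bad q then 0 else B q t)].
  apply/seteqP; split => t /=.
    by move=> H q; have := H q Logic.I; rewrite /preimage /= YfunE.
  by move=> H q _; rewrite /preimage /= YfunE.
have [hb|hb] := pselect (forall q, bad q -> Ai q 0).
- have E2 : Yfun B bad @^-1` box Ai =
      \bigcap_q (B q @^-1` (if bad q then setT else Ai q)).
    rewrite YE; apply/seteqP; split => t /=.
      by move=> H q _; have := H q; case: (bad q).
    by move=> H q; have := H q Logic.I; case: (boolP (bad q)) => // bq _; exact: hb.
  have E1 : B p @^-1` A `&` Yfun B bad @^-1` box Ai =
      \bigcap_q (B q @^-1` (if q == p then A else if bad q then setT else Ai q)).
    rewrite E2; apply/seteqP; split => t /=.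
      move=> [Ht H] q _; case: eqP => [->//|_]; exact: H.
    move=> H; split; first by have := H p Logic.I; rewrite eqxx.
    move=> q _; have := H q Logic.I; case: eqP => [->|//]; by rewrite bp.
  rewrite E1 E2 !hind; last 2 first.
  - by move=> q; case: (bad q).
  - by move=> q; case: (q == p) => //; case: (bad q).
  rewrite (bigD1 p) //= eqxx [in RHS](bigD1 p) //= bp preimage_setT probability_setT mul1e.
  congr (_ * _)%E; apply: eq_bigr => q /negbTE ->; done.
- have E0 : Yfun B bad @^-1` box Ai = set0.
    rewrite YE; apply/seteqP; split => t // /= H; apply: hb => q bq.
    by have := H q; rewrite bq.
  by rewrite E0 setI0 measure0 mule0.
Qed.

End BoxIndep.
Arguments Yfun {d T R P N}.

Section Meas.
Context {dU} {U : measurableType dU} {R : realType}.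

Lemma meas_wv (g : nat -> U -> R) : (forall i, measurable_fun setT (g i)) ->
  forall k, measurable_fun setT (fun u => wv (fun i => g i u) k).
Proof.
move=> mg; elim=> [|k IH] /=; first exact: measurable_cst.
exact: (measurable_maxr (measurable_cst _) (measurable_funD IH (mg k))).
Qed.

Lemma meas_iv (g : nat -> U -> R) : (forall i, measurable_fun setT (g i)) ->
  forall k, measurable_fun setT (fun u => iv (fun i => g i u) k).
Proof.
move=> mg [|k] /=; first exact: measurable_cst.
apply: measurable_maxr; first exact: measurable_cst.
have := measurable_funN (measurable_funD (meas_wv g mg k) (mg k)); exact.
Qed.

Lemma meas_Phi w n (g : nat -> U -> R) : (forall i, measurable_fun setT (g i)) ->
  measurable_fun setT (fun u => Phi w n (fun i => g i u)).
Proof.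
move=> mg; rewrite /Phi.
apply: measurable_funD; apply: measurable_funM; try exact: measurable_cst.
  by apply: measurable_sum => i; apply: meas_iv.
by apply: measurable_sum => i; apply: meas_wv.
Qed.

End Meas.

Lemma ex_min_seq (R : realType) (I : eqType) (f : I -> \bar R) (s : seq I) (x0 : I) :
  exists2 x, x \in x0 :: s & forall y, y \in x0 :: s -> (f x <= f y)%E.
Proof.
elim: s x0 => [|a s IH] x0.
  exists x0; first exact: mem_head.
  by move=> y; rewrite inE => /eqP ->.
have [x xin H] := IH a.
have [h|h] := leP (f x0) (f x).
  exists x0; first exact: mem_head.
  move=> y; rewrite inE => /orP[/eqP ->//|yin]; exact: le_trans h (H y yin).
exists x; first by rewrite inE xin orbT.
move=> y; rewrite inE => /orP[/eqP ->|yin]; [exact: ltW|exact: H].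
Qed.

Lemma ex_min_fin (R : realType) (I : finType) (x0 : I) (f : I -> \bar R) :
  exists x, forall y, (f x <= f y)%E.
Proof.
have [x _ H] := @ex_min_seq R I f (enum I) x0.
by exists x => y; apply: H; rewrite inE mem_enum orbT.
Qed.

Ltac cside := solve [ done | exact/measurable_EFinP | by move=> t _; rewrite lee_fin
  | by rewrite lee_fin | by move=> t _; rewrite mule_ge0 // lee_fin
  | by apply: measurable_funeM; exact/measurable_EFinP ].

Section Cost.
Context d (T : measurableType d) (R : realType) (P : probability T R) (n : nat).
Variables (B : 'I_n.+1 -> {RV P >-> R}) (x : 'I_n.+1 -> R) (w : R).

Definition vv (tau : {perm 'I_n.+1}) (t : T) : nat -> R :=
  fun i => B (tau (inord i)) t - x (tau (inord i)).

Lemma waitingE tau i t : waiting tau x (fun i => B i) i t = wv (vv tau t) i.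
Proof. by elim: i => [|i IH] //=; rewrite IH addrA. Qed.

Lemma idleE tau i t : idle tau x (fun i => B i) i t = iv (vv tau t) i.
Proof. by case: i => [|i] //=; rewrite waitingE addrA. Qed.

Lemma meas_vv tau i : measurable_fun setT (fun t => vv tau t i).
Proof. by apply: measurable_funB => //; exact: measurable_cst. Qed.

Lemma cost_eq tau : 0 <= w -> w <= 1 ->
  cost P (fun i => B i) tau x w = (\int[P]_t (Phi w n (vv tau t))%:E)%E.
Proof.
move=> w0 w1; have w1' : 0 <= 1 - w by lra.
rewrite /cost.
have E1 : (\sum_(i < n.+1) \int[P]_t (idle tau x (fun i => B i) i t)%:E)%E =
          (\int[P]_t (\sum_(i < n.+1) iv (vv tau t) i)%:E)%E.
  transitivity (\int[P]_t (\sum_(i < n.+1) (iv (vv tau t) i)%:E))%E; last first.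
    by apply: eq_integral => t _; rewrite sumEFin.
  rewrite ge0_integral_sum //.
  - by apply: eq_bigr => i _; apply: eq_integral => t _; rewrite idleE.
  - by move=> i; apply/measurable_EFinP; by have := meas_iv (fun k t => vv tau t k) (meas_vv tau) i.
  - by move=> i t _; rewrite lee_fin iv_ge0.
have E2 : (\sum_(i < n.+1) \int[P]_t (waiting tau x (fun i => B i) i t)%:E)%E =
          (\int[P]_t (\sum_(i < n.+1) wv (vv tau t) i)%:E)%E.
  transitivity (\int[P]_t (\sum_(i < n.+1) (wv (vv tau t) i)%:E))%E; last first.
    by apply: eq_integral => t _; rewrite sumEFin.
  rewrite ge0_integral_sum //.
  - by apply: eq_bigr => i _; apply: eq_integral => t _; rewrite waitingE.
  - by move=> i; apply/measurable_EFinP; by have := meas_wv (fun k t => vv tau t k) (meas_vv tau) i.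
  - by move=> i t _; rewrite lee_fin wv_ge0.
rewrite E1 E2.
have mI : measurable_fun setT (fun t => (\sum_(i < n.+1) iv (vv tau t) i)).
  by apply: measurable_sum => i; by have := meas_iv (fun k t => vv tau t k) (meas_vv tau) i.
have mW : measurable_fun setT (fun t => (\sum_(i < n.+1) wv (vv tau t) i)).
  by apply: measurable_sum => i; by have := meas_wv (fun k t => vv tau t k) (meas_vv tau) i.
have s0 : forall t, 0 <= \sum_(i < n.+1) iv (vv tau t) i.
  by move=> t; apply: sumr_ge0 => i _; apply: iv_ge0.
have s1 : forall t, 0 <= \sum_(i < n.+1) wv (vv tau t) i.
  by move=> t; apply: sumr_ge0 => i _; apply: wv_ge0.
rewrite -ge0_integralZl; try cside.
rewrite -[X in (_ + X)%E]ge0_integralZl; try cside.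
rewrite -ge0_integralD; try cside.
Qed.

End Cost.
Arguments vv {d T R P n}.

Section Chain.
Context d (T : measurableType d) (R : realType) (P : probability T R) (n : nat).
Variable B : 'I_n.+1 -> {RV P >-> R}.
Hypothesis hfmv : forall i, finite_mean_var (B i).
Hypothesis hdil : forall i j : 'I_n.+1, val j = (val i).+1 -> le_dil P (B i) (B j).

Lemma int_phi (phi : R -> R) i (al be : R) : measurable_fun setT phi ->
  (forall z, 0 <= phi z) -> (forall z, phi z <= al + be * `|z|) ->
  P.-integrable setT (EFin \o (phi \o (fun t => B i t - mean P (B i)))).
Proof.
move=> mphi p0 pb.
set mu := mean P (B i).
have hB : P.-integrable setT (EFin \o (B i)) := (hfmv i).1.
have hg : P.-integrable setT
    (fun t => ((`|al| + `|be| * `|mu|)%:E + (`|be|)%:E * (`|B i t|)%:E)%E).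
  apply: (integrableD measurableT (finite_measure_integrable_cst P _ measurableT)).
  apply: integrableZl => //; exact: integrable_norm hB.
apply: le_integrable hg => //.
- apply/measurable_EFinP; apply: measurableT_comp => //.
  apply: measurable_funB => //; exact: measurable_cst.
- move=> t _ /=.
  have g0 : 0 <= `|al| + `|be| * `|mu| + `|be| * `|B i t|.
    by rewrite addr_ge0 ?mulr_ge0 ?addr_ge0.
  rewrite lee_fin (ger0_norm (p0 _)) (ger0_norm g0).
  have h1 := pb (B i t - mu).
  have h2 : `|B i t - mu| <= `|B i t| + `|mu|.
    by have := ler_normD (B i t) (- mu); rewrite normrN.
  have h3 : be * `|B i t - mu| <= `|be| * (`|B i t| + `|mu|).
    apply: le_trans (ler_wpM2r (normr_ge0 _) (ler_norm be)) _.
    by apply: ler_wpM2l => //; exact: normr_ge0.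
  have h4 := ler_norm al.
  move: h1 h3 h4; rewrite mulrDr.
  lra.
Qed.

Lemma chain_le (phi : R -> R) : convex_fun phi -> measurable_fun setT phi ->
  (forall z, 0 <= phi z) -> (exists al be : R, forall z, phi z <= al + be * `|z|) ->
  forall m : 'I_n.+1,
  (\int[P]_t (phi (B m t - mean P (B m)))%:E <=
   \int[P]_t (phi (B ord_max t - mean P (B ord_max)))%:E)%E.
Proof.
move=> hc mphi p0 [al [be pb]] m.
pose Q (k : nat) := (\int[P]_t (phi (B (inord k) t - mean P (B (inord k))))%:E)%E.
have step k : (k < n)%N -> (Q k <= Q k.+1)%E.
  move=> kn; rewrite /Q.
  have hv : val (inord k.+1 : 'I_n.+1) = (val (inord k : 'I_n.+1)).+1.
    have k1 : (k < n.+1)%N := ltn_trans kn (ltnSn n).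
    have k2 : (k.+1 < n.+1)%N by rewrite ltnS.
    by rewrite /= (inordK k1) (inordK k2).
  have H := hdil (inord k) (inord k.+1) hv phi hc (@int_phi phi (inord k) al be mphi p0 pb) (@int_phi phi (inord k.+1) al be mphi p0 pb).
  exact: H.
have mono k : (m <= k <= n)%N -> (Q m <= Q k)%E.
  elim: k => [|k IH] /andP[mk kn].
    by rewrite leqn0 in mk; rewrite (eqP mk).
  move: mk; rewrite leq_eqVlt => /orP[/eqP <-//|mk].
  apply: le_trans (step k kn); apply: IH; rewrite -ltnS mk /=; exact: ltnW.
have := mono n; rewrite leq_ord leqnn => /(_ isT).
have E : (inord n : 'I_n.+1) = ord_max by apply: val_inj; rewrite /= inordK.
by rewrite /Q E inord_val.
Qed.

End Chain.

Theorem propositionE1 (d : measure_display) (T : measurableType d)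
  (R : realType) (P : probability T R) (n : nat)
  (B : 'I_n.+1 -> {RV P >-> R}) (w : R) :
  0 < w -> w < 1 ->
  independent_rvs B ->
  (forall i, finite_mean_var (B i)) ->
  (forall i j : 'I_n.+1, val j = (val i).+1 -> le_dil P (B i) (B j)) ->
  exists tau : {perm 'I_n.+1},
    tau ord_max = ord_max /\
    forall sigma : {perm 'I_n.+1},
      (cost P (fun i => B i) tau (fun i => mean P (B i)) w
       <= cost P (fun i => B i) sigma (fun i => mean P (B i)) w)%E.
Proof.
move=> w0 w1 hind hfmv hdil.
have w0' : 0 <= w := ltW w0.
have w1' : w <= 1 := ltW w1.
pose x := fun i => mean P (B i).
have [s0 Hs0] := @ex_min_fin R _ (1%g : {perm 'I_n.+1})
  (fun s => cost P (fun i => B i) s (fun i => mean P (B i)) w).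
have [hs0|hs0] := eqVneq (s0 ord_max) ord_max; first by exists s0.
pose m := s0 ord_max.
pose j := (s0^-1)%g ord_max.
have s0j : s0 j = ord_max by rewrite /j permKV.
have jn : j != ord_max.
  by apply/eqP => hj; move/eqP: hs0; apply; rewrite -{1}hj s0j.
have jlt : (j < n)%N.
  have := ltn_ord j; rewrite ltnS leq_eqVlt => /orP[/eqP hj|//].
  by exfalso; move/negP: jn; apply; apply/eqP/val_inj.
pose tau := (tperm j ord_max * s0)%g.
have tauE k : tau k = s0 (tperm j ord_max k) by rewrite permM.
exists tau; split; first by rewrite tauE tpermR.
move=> sigma; apply: le_trans (Hs0 sigma).
rewrite !cost_eq //.
pose bad := fun q : 'I_n.+1 => (q == m) || (q == ord_max).
have mY : measurable_fun setT (Yfun B bad).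
  apply/measurable_fun_tnthP => q.
  rewrite (_ : _ \o _ = fun t => if bad q then 0 else B q t); last first.
    by apply: funext => t; rewrite /= YfunE.
  by case: (bad q) => //; exact: measurable_cst.
pose Y := HB.pack_for ({mfun T >-> n.+1.-tuple R}) (Yfun B bad)
  (isMeasurableFun.Build _ _ _ _ (Yfun B bad) mY).
pose vy (y : n.+1.-tuple R) := fun i : nat => tnth y (s0 (inord i)) - x (s0 (inord i)).
pose F z y := Phi w n (upd (vy y) j z).
pose a (y : n.+1.-tuple R) :=
  n.+1%:R * \sum_(i < n) (`|tnth y (s0 (inord i))| + `|x (s0 (inord i))|).
pose b := n.+1%:R * n%:R : R.
have notbad i : (i < n)%N -> i != j -> bad (s0 (inord i)) = false.
  move=> hi hij.
  have hin : (i < n.+1)%N := ltnW hi.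
  have hi1 : (inord i : 'I_n.+1) != ord_max.
    apply/eqP => /(congr1 val); rewrite /= (inordK hin) => hh.
    by move: hi; rewrite hh ltnn.
  have hi2 : (inord i : 'I_n.+1) != j.
    apply/eqP => /(congr1 val); rewrite /= (inordK hin) => hh.
    by move/eqP: hij.
  rewrite /bad; apply/negbTE; rewrite negb_or; apply/andP; split.
    by rewrite /m (inj_eq perm_inj).
  by rewrite -[X in _ == X]s0j (inj_eq perm_inj).
have EL : (\int[P]_t (Phi w n (vv B x tau t))%:E =
    \int[P]_t (F (B m t - x m) (Yfun B bad t))%:E)%E.
  apply: eq_integral => t _; congr (_%:E); apply: Phi_ext => i hi.
  have hin : (i < n.+1)%N := ltnW hi.
  rewrite /vv /F /upd /vy.
  have [hij|hij] := eqVneq i j.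
    have -> : (inord i : 'I_n.+1) = j by apply: val_inj; rewrite /= (inordK hin) hij.
    by rewrite tauE tpermL.
  have h1 : j != inord i.
    apply/eqP => /(congr1 val); rewrite /= (inordK hin) => hh.
    by rewrite hh eqxx in hij.
  have h2 : ord_max != inord i :> 'I_n.+1.
    apply/eqP => /(congr1 val); rewrite /= (inordK hin) => hh.
    by move: hi; rewrite -hh ltnn.
  by rewrite tauE tpermD // YfunE notbad.
have ER : (\int[P]_t (Phi w n (vv B x s0 t))%:E =
    \int[P]_t (F (B ord_max t - x ord_max) (Yfun B bad t))%:E)%E.
  apply: eq_integral => t _; congr (_%:E); apply: Phi_ext => i hi.
  have hin : (i < n.+1)%N := ltnW hi.
  rewrite /vv /F /upd /vy.
  have [hij|hij] := eqVneq i j.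
    have -> : (inord i : 'I_n.+1) = j by apply: val_inj; rewrite /= (inordK hin) hij.
    by rewrite s0j.
  by rewrite YfunE notbad.
rewrite EL ER.
have bm : bad m by rewrite /bad eqxx.
have bM : bad ord_max by rewrite /bad eqxx orbT.
have i1 : indep2 P (B m) Y.
  apply: (@indep_ext _ _ _ P _ (B m) Y) => A Ai mA mAi.
  exact: (@box_indep _ _ _ P _ B bad m hind bm A Ai mA mAi).
have i2 : indep2 P (B ord_max) Y.
  apply: (@indep_ext _ _ _ P _ (B ord_max) Y) => A Ai mA mAi.
  exact: (@box_indep _ _ _ P _ B bad ord_max hind bM A Ai mA mAi).
have mF : measurable_fun setT (fun zs : R * (n.+1.-tuple R) => F zs.1 zs.2).
  have := @meas_Phi _ _ R w n (fun i (zs : R * (n.+1.-tuple R)) => upd (vy zs.2) j zs.1 i).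
  apply => i; rewrite /upd.
  case: (i == j); first exact: measurable_fst.
  apply: measurable_funB; last exact: measurable_cst.
  exact: (measurableT_comp (measurable_tnth _) measurable_snd).
have Fb z y : F z y <= a y + b * `|z|.
  apply: le_trans (@Phi_le R w n (upd (vy y) j z) w0' w1') _.
  have HS : Sabs (upd (vy y) j z) n <=
      n%:R * `|z| + \sum_(i < n) (`|tnth y (s0 (inord i))| + `|x (s0 (inord i))|).
    rewrite /Sabs.
    have -> : n%:R * `|z| = \sum_(i < n) `|z| by rewrite sumr_const card_ord mulr_natl.
    rewrite -big_split /=; apply: ler_sum => i _.
    rewrite /upd; case: ifP => _.
      by rewrite lerDl addr_ge0.
    rewrite /vy; have := ler_normD (tnth y (s0 (inord i))) (- x (s0 (inord i))).
    rewrite normrN => h; apply: le_trans h _.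
    by rewrite lerDr.
  rewrite /a /b; have := ler_wpM2l (ler0n R n.+1) HS.
  by rewrite mulrDr mulrA addrC.
have ma : measurable_fun setT a.
  apply: measurable_funM; first exact: measurable_cst.
  apply: measurable_sum => i; apply: measurable_funD; last exact: measurable_cst.
  exact: (measurableT_comp (@normr_measurable R setT) (measurable_tnth _)).
have ia : P.-integrable setT (EFin \o (a \o Y)).
  apply: (eq_integrable measurableT (fun t => (n.+1%:R)%:E *
     \sum_(i < n) ((`|if bad (s0 (inord i)) then 0 else B (s0 (inord i)) t|)%:E
                   + (`|x (s0 (inord i))|)%:E))%E).
    move=> t _; rewrite /= /a EFinM sumEFin; congr (_ * _)%E; congr (_%:E).
    by apply: eq_bigr => i _; rewrite YfunE.
  apply: integrableZl => //; apply: integrable_sum => // i _.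
  apply: integrableD => //; last exact: finite_measure_integrable_cst.
  case: (bad _).
    apply: (eq_integrable measurableT (EFin \o cst 0)).
      by move=> t _; rewrite /= normr0.
    exact: finite_measure_integrable_cst.
  exact: integrable_norm (hfmv _).1.
apply: (@key _ _ _ P _ _ (B m) (B ord_max) Y (x m) (x ord_max) F a b i1 i2 mF).
- by move=> z y; apply: Phi_ge0.
- by move=> y; apply: Phi_upd_cvx.
- exact: Fb.
- exact: ma.
- by rewrite /b mulr_ge0.
- exact: ia.
- move=> phi hc mphi p0 hb.
  exact: (@chain_le _ _ _ P n B hfmv hdil phi hc mphi p0 hb m).
Qed.
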